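(* Let $G$ be a finite group with $g_k(G)\geq N$, where $k\geq2$, and let $1\to C\to G\to G'\to1$ be an exact sequence with $C$ cyclic. Then $g_{k-1}(G')\geq N$.
   Context: For a finite group $G$ and positive integer $N$, $r_N(G)$ is the minimum number of generators among subgroups of $G$ of index at most $N$, and $g_k(G)=\max\{N : |G|\geq N \text{ and } r_N(G)\geq k\}$. *)

(* Defs.v *)
From mathcomp Require Import all_boot all_fingroup all_solvable.
Set Implicit Arguments. Unset Strict Implicit. Unset Printing Implicit Defensive.
Local Open Scope group_scope.

Definition ngen (gT : finGroupType) (H : {set gT}) : nat :=
  \big[minn/#|H|]_(X : {set gT} | <<X>> == H) #|X|.

Definition rN (gT : finGroupType) (N : nat) (G : {set gT}) : nat :=
  \big[minn/#|G|]_(H : {group gT} | (H \subset G) && (#|G : H| <= N)) ngen H.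

(* g_k(G) = max { N >= 1 : |G| >= N and r_N(G) >= k }  (0 if the set is empty) *)
Definition gk (gT : finGroupType) (k : nat) (G : {set gT}) : nat :=
  \max_(N < #|G|.+1 | (0 < N) && (k <= rN N G)) N.

(* Main.v *)
Require Import Defs.
From mathcomp Require Import all_boot all_fingroup all_solvable.
Local Open Scope group_scope.
Set Implicit Arguments. Unset Strict Implicit.

Lemma bigmin_geq (I : finType) (P : pred I) (F : I -> nat) d n :
  n <= d -> (forall i, P i -> n <= F i) -> n <= \big[minn/d]_(i | P i) F i.
Proof.
move=> hd hF; apply: (big_ind (fun x => n <= x)) => //.
by move=> x y hx hy; rewrite leq_min hx hy.
Qed.

Lemma bigmin_leF (I : finType) (P : pred I) (F : I -> nat) d i :
  P i -> \big[minn/d]_(j | P j) F j <= F i.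
Proof.
move=> Pi; rewrite -big_filter /=.
have : i \in [seq j <- index_enum I | P j] by rewrite mem_filter Pi /index_enum -enumT mem_enum.
elim: [seq j <- _ | _] => [|a r IH] //=; rewrite inE big_cons => /orP[/eqP<-|/IH h].
  exact: geq_minl.
exact: leq_trans (geq_minr _ _) h.
Qed.

Lemma bigmin_led (I : finType) (P : pred I) (F : I -> nat) d :
  \big[minn/d]_(j | P j) F j <= d.
Proof.
rewrite -big_filter; elim: [seq j <- _ | _] => [|a r IH]; first by rewrite big_nil.
by rewrite big_cons; apply: leq_trans (geq_minr _ _) IH.
Qed.

Lemma ngen_le (gT : finGroupType) (H X : {set gT}) :
  <<X>> = H -> ngen H <= #|X|.
Proof. by move=> e; apply: bigmin_leF; rewrite e eqxx. Qed.

Lemma ngen_ge (gT : finGroupType) (H : {group gT}) n :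
  (forall X : {set gT}, <<X>> = H -> n <= #|X|) -> n <= ngen H.
Proof.
move=> hX; apply: bigmin_geq; first by apply: hX; rewrite genGid.
by move=> X /eqP; apply: hX.
Qed.

Lemma rN_le (gT : finGroupType) N (G H : {group gT}) :
  H \subset G -> #|G : H| <= N -> rN N G <= ngen H.
Proof. by move=> sHG iH; apply: (@bigmin_leF _ (fun H0 : {group gT} => (H0 \subset G) && (#|G : H0| <= N)) (fun H0 : {group gT} => ngen H0) _ H); rewrite sHG iH. Qed.

Lemma rN_ge (gT : finGroupType) N (G : {group gT}) n :
  0 < N ->
  (forall H : {group gT}, H \subset G -> #|G : H| <= N -> n <= ngen H) ->
  n <= rN N G.
Proof.
move=> N0 hH; apply: bigmin_geq.
  apply: leq_trans (hH G (subxx _) _) _; first by rewrite indexgg.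
  by apply: ngen_le; rewrite genGid.
by move=> H /andP[s i]; apply: hH.
Qed.

Lemma rN_mono (gT : finGroupType) N M (G : {group gT}) :
  0 < N -> N <= M -> rN M G <= rN N G.
Proof.
move=> N0 NM; apply: bigmin_geq; first exact: bigmin_led.
by move=> H /andP[s i]; apply: rN_le => //; apply: leq_trans i NM.
Qed.

Lemma gk_rN (gT : finGroupType) k N (G : {group gT}) :
  0 < N -> N <= gk k G -> k <= rN N G.
Proof.
move=> N0 hN; rewrite leqNgt; apply/negP => hlt.
suff : gk k G <= N.-1 by rewrite leqNgt prednK // hN.
apply/bigmax_leqP => M /andP[M0 kM].
rewrite leqNgt; apply/negP => hM.
have NM : N <= M by rewrite -(prednK N0).
move: (leq_trans kM (rN_mono G N0 NM)); rewrite leqNgt hlt //.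
Qed.

Theorem mainTheorem14 (gT rT : finGroupType) (G : {group gT})
    (f : {morphism G >-> rT}) (k N : nat) :
  2 <= k -> 0 < N -> N <= gk k G -> cyclic ('ker f) ->
  N <= gk k.-1 (f @* G).
Proof.
move=> k2 N0 hN /cyclicP[c defC].
have kr := gk_rN N0 hN.
have sCG : 'ker f \subset G := normal_sub (ker_normal f).
have cG : c \in G by apply: (subsetP sCG); rewrite defC cycle_id.
have NG' : N <= #|f @* G|.
  rewrite leqNgt; apply/negP => hlt.
  have : #|G : 'ker f| <= N.
    by rewrite -card_quotient ?ker_norm // (card_isog (first_isog f)) ltnW.
  move/(rN_le sCG) => h.
  have : ngen ('ker f) <= 1.
    by rewrite defC; apply: leq_trans (ngen_le (X := [set c]) _) _; rewrite ?cards1.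
  move=> h1; have := leq_trans kr (leq_trans h h1); rewrite leqNgt.
  by case: k k2 {kr hN} => [|[|k]].
have key : k.-1 <= rN N (f @* G).
  apply: rN_ge => // H' sH' iH'.
  apply: ngen_ge => X' genX'.
  set H := (f @*^-1 H')%G.
  have sHG : H \subset G by apply: morphpre_sub.
  have iH : #|G : H| <= N.
    by rewrite -{1}(morphimGK sCG (subxx _)) index_morphpre ?subxx.
  have kH := leq_trans kr (rN_le sHG iH).
  have sX' : X' \subset f @* G.
    by apply: subset_trans sH'; rewrite -genX' subset_gen.
  pose g (y : rT) := odflt 1 [pick x in G | f x == y].
  have gP y : y \in f @* G -> g y \in G /\ f (g y) = y.
    case/morphimP=> x xD _ ->; rewrite /g.
    case: pickP => [z /andP[zG /eqP ->] | /(_ x)] //=.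
    by rewrite xD eqxx.
  pose X := g @: X' :|: [set c].
  have sXG : X \subset G.
    apply/subsetP=> x; rewrite inE => /orP[/imsetP[y yX ->]|/set1P->] //.
    by case: (gP y (subsetP sX' y yX)).
  have imX : f @* X = X' :|: [set 1].
    rewrite morphimU morphim_set1 //.
    have -> : f c = 1 by apply/(kerP _ cG); rewrite defC cycle_id.
    congr (_ :|: _); rewrite morphimEsub; last by apply: subset_trans sXG; rewrite subsetUl.
    rewrite -imset_comp; apply/setP=> y; apply/imsetP/idP => [[z zX ->]|yX].
      by rewrite /= (gP z (subsetP sX' z zX)).2.
    by exists y => //=; rewrite (gP y (subsetP sX' y yX)).2.
  have genX : <<X>> = H.
    rewrite -(@morphimGK _ _ _ f <<X>>%G) /=.
    - rewrite morphim_gen // imX; congr (f @*^-1 _).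
      apply/eqP; rewrite eqEsubset -genX' gen_subG subUset subset_gen sub1set group1 /= genS // subsetUl.
    - by [].
    - by rewrite defC cycle_subG mem_gen // !inE eqxx orbT.
    - by rewrite gen_subG.
  have := leq_trans kH (ngen_le genX).
  move=> hk.
  have h1 : #|X| <= #|X'| + 1.
    by apply: leq_trans (leq_card_setU _ _) _; rewrite cards1 leq_add2r leq_imset_card.
  by rewrite -subn1 leq_subLR addnC (leq_trans hk h1).
have NB : N < #|f @* G|.+1 by rewrite ltnS.
apply: (@leq_bigmax_cond _ (fun M : 'I_#|f @* G|.+1 => (0 < M) && (k.-1 <= rN M (f @* G)))
          (fun M : 'I_#|f @* G|.+1 => nat_of_ord M) (Ordinal NB)); by rewrite /= N0 key.
Qed.
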